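(* $\mathcal{FCOM}^{S}_{\mathcal{F.V.}} > \mathcal{FCOM}^{S}_{\mathcal{L.V.}}$, i.e. the model $\mathcal{FCOM}$ under the semi-synchronous scheduler with full visibility is computationally more powerful than the model $\mathcal{FCOM}$ under the semi-synchronous scheduler with limited visibility.
   Context: Robots are anonymous, identical, autonomous computational entities viewed as points moving in the Euclidean plane. Each has its own local coordinate system, with no agreement between robots and no common chirality, and perceives itself at its origin. Robots operate in Look-Compute-Move cycles. In Look a robot takes an instantaneous snapshot of the positions (and visible lights, if any) of the robots it can see. In Compute it runs the common algorithm on the snapshot to obtain a destination. In Move it moves there. Models: - $\mathcal{OBLOT}$: robots are oblivious (no memory of previous cycles) and silent (no means of communication). - $\mathcal{LUMI}$: each robot carries a persistent light whose color is taken from a finite set and is set at the end of Compute; the light is visible to the robot itself and to the other robots. - $\mathcal{FSTA}$: the light is internal, visible only to its owner. It acts as a finite persistent state; there is no communication. - $\mathcal{FCOM}$: the light is visible only to the other robots. A robot does not see its own light and is otherwise oblivious. Schedulers: time is divided into rounds. Under the semi-synchronous scheduler $S$ (SSYNCH), in each round an adversarially chosen set of robots is activated and they perform one full cycle in perfect synchronization; every robot is activated infinitely often. Under the fully synchronous scheduler $F$ (FSYNCH), every robot is activated in every round. Visibility: - Full visibility $\mathcal{F.V.}$: every robot sees all robots. - Limited visibility $\mathcal{L.V.}$: a robot sees only the robots within a fixed distance $V_r$ of its current position, with $V_r$ the same for all robots. The visibility graph (robots adjacent iff they see each other) of the initial configuration is assumed connected. Relations: $\mathcal{M}^X_V$ denotes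 model $\mathcal{M}$ under scheduler $X$ with visibility $V$. For a team $R$ of robots, $Task(\mathcal{M},X,V;R)$ is the set of problems (tasks where robots must form some configuration(s) subject to conditions) solvable by $R$ in that setting. $\mathcal{R}$ is the set of all teams, and $\mathcal{R}_n$ the set of teams of size $n$. - $\mathcal{M}^{X_1}_{V_1} \ge \mathcal{N}^{X_2}_{V_2}$ if for all $R\in\mathcal{R}$, $Task(\mathcal{M},X_1,V_1;R)\supseteq Task(\mathcal{N},X_2,V_2;R)$. - $>$ means $\ge$ holds and there exists $R\in\mathcal{R}$ with $Task(\mathcal{M},X_1,V_1;R)\setminus Task(\mathcal{N},X_2,V_2;R)\neq\emptyset$. - $\perp$ (incomparable) means there exist $R_1,R_2\in\mathcal{R}$ with $Task(\mathcal{M},X_1,V_1;R_1)\setminus Task(\mathcal{N},X_2,V_2;R_1)\neq\emptyset$ and $Task(\mathcal{N},X_2,V_2;R_2)\setminus Task(\mathcal{M},X_1,V_1;R_2)\neq\emptyset$. *)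

(* Defs.v *)
From Stdlib Require Import Reals List Permutation Relations.
From mathcomp Require Import ssreflect ssrbool ssrfun eqtype ssrnat seq choice fintype.

Definition point : Type := (R * R)%type.

Definition sqdist (p q : point) : R :=
  ((fst p - fst q) * (fst p - fst q) + (snd p - snd q) * (snd p - snd q))%R.

Record team := Team { tn : nat; tV : R; tV_pos : (0 < tV)%R }.

Inductive visibility := FV | LV.

(** A local coordinate system: an orthogonal 2x2 matrix [[a b];[c d]]
    (arbitrary rotation, possibly a reflection: no agreement on axes and no
    common chirality); the robot is at the origin of its own system. *)
Record frame := Frame { fa : R; fb : R; fc : R; fd : R }.

Definition orthogonal (M : frame) : Prop :=
  (fa M * fa M + fc M * fc M = 1 /\ fb M * fb M + fd M * fd M = 1 /\
   fa M * fb M + fc M * fd M = 0)%R.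

Definition to_local (p : point) (M : frame) (q : point) : point :=
  let x := (fst q - fst p)%R in let y := (snd q - snd p)%R in
  ((fa M * x + fc M * y)%R, (fb M * x + fd M * y)%R).

Definition to_global (p : point) (M : frame) (v : point) : point :=
  ((fst p + (fa M * fst v + fb M * snd v))%R,
   (snd p + (fc M * fst v + fd M * snd v))%R).

Definition sees (Vr : R) (v : visibility) (p q : point) : bool :=
  match v with
  | FV => true
  | LV => if Rle_dec (sqdist p q) (Vr * Vr)%R then true else false
  end.

(** FCOM snapshot of robot i: positions (in its local frame) and lights of the
    OTHER robots it can see; its own light is not visible to itself. *)
Definition snapshot (T : team) (v : visibility) (M : 'I_(tn T) -> frame)
  (pos : 'I_(tn T) -> point) (col : 'I_(tn T) -> nat) (i : 'I_(tn T))
  : list (point * nat) :=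
  map (fun j => (to_local (pos i) (M i) (pos j), col j))
      (filter (fun j => (j != i) && sees (tV T) v (pos i) (pos j)) (enum 'I_(tn T))).

(** An FCOM algorithm: maps a snapshot to (local destination, new light colour). *)
Definition algorithm := list (point * nat) -> point * nat.

(** Semi-synchronous execution: in round t the robots with [act t i = true]
    perform one full Look-Compute-Move cycle in perfect synchronisation
    (rigid moves); lights are all initially colour 0. *)
Fixpoint exec (T : team) (v : visibility) (A : algorithm)
  (M : 'I_(tn T) -> frame) (act : nat -> 'I_(tn T) -> bool)
  (p0 : 'I_(tn T) -> point) (t : nat)
  : ('I_(tn T) -> point) * ('I_(tn T) -> nat) :=
  match t with
  | 0 => (p0, fun _ => 0%nat)
  | S t' =>
      let (pos, col) := exec T v A M act p0 t' in
      (fun i => if act t' i then to_global (pos i) (M i) (fst (A (snapshot T v M pos col i)))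
                else pos i,
       fun i => if act t' i then snd (A (snapshot T v M pos col i)) else col i)
  end.

Definition fair (n : nat) (act : nat -> 'I_n -> bool) : Prop :=
  forall (i : 'I_n) (t : nat), exists t', (t <= t')%nat /\ act t' i = true.

Definition vis_adj (T : team) (p : 'I_(tn T) -> point) (i j : 'I_(tn T)) : Prop :=
  i <> j /\ (sqdist (p i) (p j) <= tV T * tV T)%R.

Definition valid_init (T : team) (p : 'I_(tn T) -> point) : Prop :=
  (forall i j, p i = p j -> i = j) /\
  (forall i j, clos_refl_trans _ (vis_adj T p) i j).

(** A problem for a team T: a set of admissible executions, i.e. of sequences
    of configurations (the robots' positions in a global frame over time). *)
Definition problem (T : team) := (nat -> 'I_(tn T) -> point) -> Prop.

Definition solvable (v : visibility) (T : team) (P : problem T) : Prop :=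
  exists (k : nat) (A : algorithm),
    (0 < k)%nat /\
    (forall s, (snd (A s) < k)%nat) /\
    (forall s s', Permutation s s' -> A s = A s') /\   (* anonymity *)
    forall (M : 'I_(tn T) -> frame) (act : nat -> 'I_(tn T) -> bool)
           (p0 : 'I_(tn T) -> point),
      (forall i, orthogonal (M i)) -> fair (tn T) act -> valid_init T p0 ->
      P (fun t => fst (exec T v A M act p0 t)).

Definition Task (v : visibility) (T : team) : problem T -> Prop := solvable v T.

Definition model_ge (v1 v2 : visibility) : Prop :=
  forall (T : team) (P : problem T), Task v2 T P -> Task v1 T P.

Definition model_gt (v1 v2 : visibility) : Prop :=
  model_ge v1 v2 /\
  exists (T : team) (P : problem T), Task v1 T P /\ ~ Task v2 T P.

(* Main.v *)
Require Import Defs.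
From Stdlib Require Import Reals Lra List Permutation Relations FunctionalExtensionality Classical.
From mathcomp Require Import ssreflect ssrbool ssrfun eqtype ssrnat seq choice fintype.

Lemma orth_rows (M : frame) : orthogonal M ->
  (fa M * fa M + fb M * fb M = 1 /\ fc M * fc M + fd M * fd M = 1 /\
   fa M * fc M + fb M * fd M = 0)%R.
Proof.
case: M => a b c d; rewrite /orthogonal /= => [[H1 [H2 H3]]].
set D := (a * d - b * c)%R.
have HD : (D * D = 1)%R.
  have -> : (D * D = (a*a+c*c)*(b*b+d*d) - (a*b+c*d)*(a*b+c*d))%R by rewrite /D; ring.
  rewrite H1 H2 H3; ring.
have Ha : a = (d * D)%R.
  have -> : a = (a * (b*b+d*d))%R by rewrite H2; ring.
  have -> : (a * (b*b+d*d) = d * D + b * (a*b+c*d))%R by rewrite /D; ring.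
  rewrite H3; ring.
have Hc : c = (- b * D)%R.
  have -> : c = (c * (b*b+d*d))%R by rewrite H2; ring.
  have -> : (c * (b*b+d*d) = - b * D + d * (a*b+c*d))%R by rewrite /D; ring.
  rewrite H3; ring.
split; last split.
- rewrite Ha.
  have -> : (d * D * (d * D) + b * b = d*d*(D*D) + b*b)%R by ring.
  rewrite HD; lra.
- rewrite Hc.
  have -> : (- b * D * (- b * D) + d * d = b*b*(D*D) + d*d)%R by ring.
  rewrite HD; lra.
- rewrite Ha Hc.
  have -> : (d * D * (- b * D) + b * d = - b*d*(D*D) + b*d)%R by ring.
  rewrite HD; ring.
Qed.

Lemma sqdist_local (p q : point) (M : frame) : orthogonal M ->
  sqdist (0%R, 0%R) (to_local p M q) = sqdist p q.
Proof.
move=> /orth_rows.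
case: M => a b c d /= [H1 [H2 H3]].
rewrite /sqdist /to_local /=.
set x := (fst q - fst p)%R; set y := (snd q - snd p)%R.
have -> : ((0 - (a * x + c * y)) * (0 - (a * x + c * y)) + (0 - (b * x + d * y)) * (0 - (b * x + d * y))
   = (a*a+b*b)*(x*x) + 2*(a*c+b*d)*(x*y) + (c*c+d*d)*(y*y))%R by ring.
rewrite H1 H2 H3 /x /y; ring.
Qed.

Definition filt (Vr : R) (s : list (point * nat)) :=
  filter (fun e : point * nat => if Rle_dec (sqdist (0%R,0%R) (fst e)) (Vr * Vr)%R then true else false) s.

Lemma perm_filt (g : point * nat -> bool) s s' : Permutation s s' ->
  Permutation (filter g s) (filter g s').
Proof.
elim=> //= [x l l' _ IH|x y l|l l' l'' _ IH1 _ IH2].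
- by case: (g x) => //; constructor.
- case: (g x); case: (g y) => //; try constructor; try reflexivity.
- exact: Permutation_trans IH1 IH2.
Qed.

Lemma snap_eq (T : team) M pos col i : orthogonal (M i) ->
  filt (tV T) (snapshot T FV M pos col i) = snapshot T LV M pos col i.
Proof.
move=> HM; rewrite /filt /snapshot filter_map -filter_predI.
congr map; apply: eq_filter => j /=.
rewrite sqdist_local // andbT; by rewrite andbC.
Qed.

Lemma exec_eq (T : team) A M act p0 t : (forall i, orthogonal (M i)) ->
  exec T FV (fun s => A (filt (tV T) s)) M act p0 t = exec T LV A M act p0 t.
Proof.
move=> HM; elim: t => //= t ->.
case: (exec T LV A M act p0 t) => pos col.
have E : forall i, filt (tV T) (snapshot T FV M pos col i) = snapshot T LV M pos col i.
  by move=> i; apply: snap_eq.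
f_equal; apply: functional_extensionality => i; by rewrite E.
Qed.

Lemma ge_FV_LV : model_ge FV LV.
Proof.
move=> T P [k [A [Hk [HA [Hp H]]]]].
exists k, (fun s => A (filt (tV T) s)); split => //; split => //; split.
- move=> s s' Hs; apply: Hp; exact: perm_filt.
- move=> M act p0 HM Hf Hv.
  have -> : (fun t => fst (exec T FV (fun s => A (filt (tV T) s)) M act p0 t))
           = (fun t => fst (exec T LV A M act p0 t)).
    apply: functional_extensionality => t; by rewrite exec_eq.
  exact: H.
Qed.

Lemma five_pos : (0 < 5)%R. Proof. lra. Qed.
Definition T4 : team := Team 4 5 five_pos.

Definition o0 : 'I_4 := @Ordinal 4 0 isT.
Definition o1 : 'I_4 := @Ordinal 4 1 isT.
Definition o2 : 'I_4 := @Ordinal 4 2 isT.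
Definition o3 : 'I_4 := @Ordinal 4 3 isT.
Lemma enum4 : enum 'I_4 = [:: o0; o1; o2; o3].
Proof. apply: (inj_map val_inj). by rewrite val_enum_ord. Qed.
Lemma cases4 (i : 'I_4) : i = o0 \/ i = o1 \/ i = o2 \/ i = o3.
Proof.
have : i \in enum 'I_4 by rewrite mem_enum.
rewrite enum4 !inE => /orP[/eqP->|/orP[/eqP->|/orP[/eqP->|/eqP->]]]; tauto.
Qed.

Definition Cen (q : 'I_4 -> point) : point :=
  (((fst (q o0) + fst (q o1) + fst (q o2) + fst (q o3)) / 4)%R,
   ((snd (q o0) + snd (q o1) + snd (q o2) + snd (q o3)) / 4)%R).

Definition P4 : problem T4 := fun traj =>
  (forall t i, traj (S t) i = traj t i \/ traj (S t) i = Cen (traj t)) /\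
  exists t, traj t <> traj 0%nat.

Lemma exec_S (T : team) v A M act p0 t i :
  fst (exec T v A M act p0 (S t)) i =
  if act t i then to_global (fst (exec T v A M act p0 t) i) (M i)
     (fst (A (snapshot T v M (fst (exec T v A M act p0 t)) (snd (exec T v A M act p0 t)) i)))
  else fst (exec T v A M act p0 t) i.
Proof. simpl; by case: (exec T v A M act p0 t). Qed.

Lemma exec_Sc (T : team) v A M act p0 t i :
  snd (exec T v A M act p0 (S t)) i =
  if act t i then snd (A (snapshot T v M (fst (exec T v A M act p0 t)) (snd (exec T v A M act p0 t)) i))
  else snd (exec T v A M act p0 t) i.
Proof. simpl; by case: (exec T v A M act p0 t). Qed.

Fixpoint psum (s : list (point * nat)) : point :=
  match s with
  | nil => (0%R, 0%R)
  | e :: s' => ((fst (fst e) + fst (psum s'))%R, (snd (fst e) + snd (psum s'))%R)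
  end.

Lemma psum_perm s s' : Permutation s s' -> psum s = psum s'.
Proof.
elim=> //= [x l l' _ ->|x y l|l l' l'' _ -> _ ->] //.
f_equal; ring.
Qed.

Definition Afv (s : list (point * nat)) : point * nat :=
  (((fst (psum s)) / 4)%R, ((snd (psum s)) / 4)%R, 0%nat).

Lemma centroid_alg (px py a b c d x1 y1 x2 y2 x3 y3 : R) :
  (a*a+b*b = 1 -> c*c+d*d = 1 -> a*c+b*d = 0 ->
  let l1 := (a*(x1-px) + c*(y1-py)) in let l2 := (b*(x1-px) + d*(y1-py)) in
  let m1 := (a*(x2-px) + c*(y2-py)) in let m2 := (b*(x2-px) + d*(y2-py)) in
  let n1 := (a*(x3-px) + c*(y3-py)) in let n2 := (b*(x3-px) + d*(y3-py)) in
  px + (a * ((l1 + (m1 + (n1 + 0))) / 4) + b * ((l2 + (m2 + (n2 + 0))) / 4)) = (px + x1 + x2 + x3) / 4 /\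
  py + (c * ((l1 + (m1 + (n1 + 0))) / 4) + d * ((l2 + (m2 + (n2 + 0))) / 4)) = (py + y1 + y2 + y3) / 4)%R.
Proof.
move=> H1 H2 H3 /=; split.
- set X := (x1 - px + (x2 - px) + (x3 - px))%R; set Y := (y1 - py + (y2 - py) + (y3 - py))%R.
  have E : forall L R0 : R, (L - R0 = (a*a+b*b - 1) * X / 4 + (a*c+b*d) * Y / 4)%R -> L = R0.
    move=> L R0; rewrite H1 H3 => HH; lra.
  apply: E; rewrite /X /Y; field.
- set X := (x1 - px + (x2 - px) + (x3 - px))%R; set Y := (y1 - py + (y2 - py) + (y3 - py))%R.
  have E : forall L R0 : R, (L - R0 = (c*c+d*d - 1) * Y / 4 + (a*c+b*d) * X / 4)%R -> L = R0.
    move=> L R0; rewrite H2 H3 => HH; lra.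
  apply: E; rewrite /X /Y; field.
Qed.

Lemma fv_step (M : 'I_4 -> frame) pos col i : orthogonal (M i) ->
  to_global (pos i) (M i) (fst (Afv (snapshot T4 FV M pos col i))) = Cen pos.
Proof.
move=> /orth_rows.
have Hs : forall j, snapshot T4 FV M pos col j =
   map (fun j0 => (to_local (pos j) (M j) (pos j0), col j0)) (filter (fun j0 => j0 != j) (enum 'I_4)).
  move=> j; rewrite /snapshot; congr map; apply: eq_filter => k /=; by rewrite andbT.
rewrite Hs enum4.
case: (cases4 i) => [->|[->|[->|->]]] /=;
case: (M _) => a b c d /= [H1 [H2 H3]];
rewrite /Cen /to_global /to_local /=;
case: (pos o0) => [x0 y0]; case: (pos o1) => [x1 y1]; case: (pos o2) => [x2 y2]; case: (pos o3) => [x3 y3] /=.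
- case: (centroid_alg x0 y0 a b c d x1 y1 x2 y2 x3 y3 H1 H2 H3) => /= E1 E2.
  rewrite E1 E2; f_equal; lra.
- case: (centroid_alg x1 y1 a b c d x0 y0 x2 y2 x3 y3 H1 H2 H3) => /= E1 E2.
  rewrite E1 E2; f_equal; lra.
- case: (centroid_alg x2 y2 a b c d x0 y0 x1 y1 x3 y3 H1 H2 H3) => /= E1 E2.
  rewrite E1 E2; f_equal; lra.
- case: (centroid_alg x3 y3 a b c d x0 y0 x1 y1 x2 y2 H1 H2 H3) => /= E1 E2.
  rewrite E1 E2; f_equal; lra.
Qed.

Lemma fv_solv : Task FV T4 P4.
Proof.
exists 1%nat, Afv; split => //; split => //; split.
- by move=> s s' Hs; rewrite /Afv (psum_perm _ _ Hs).
- move=> M act p0 HM Hf [Hinj _].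
  have step : forall t i, fst (exec T4 FV Afv M act p0 (S t)) i =
     if act t i then Cen (fst (exec T4 FV Afv M act p0 t)) else fst (exec T4 FV Afv M act p0 t) i.
    move=> t i; rewrite exec_S; case: (act t i) => //; exact: fv_step.
  split.
  + move=> t i; rewrite step; case: (act t i); tauto.
  + apply: NNPP => Hn.
    have Hc : forall t, fst (exec T4 FV Afv M act p0 t) = p0.
      move=> t; apply: NNPP => Hne; apply: Hn; by exists t.
    have [i Hi] : exists i, p0 i <> Cen p0.
      apply: NNPP => Hn2.
      have E : forall i, p0 i = Cen p0.
        move=> i; apply: NNPP => Hne; apply: Hn2; by exists i.
      have : o0 = o1 by apply: Hinj; rewrite !E.
      by move/(congr1 val).
    case: (Hf i 0%nat) => t' [_ Ha].
    apply: Hi.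
    by have := step t' i; rewrite Ha !Hc.
Qed.

Definition pA : point := ((-3)%R, 4%R).
Definition pB : point := (0%R, 0%R).
Definition pC : point := (5%R, 0%R).
Definition pD : point := (8%R, 4%R).
Definition pD' : point := (8%R, (-4)%R).
Definition p1 (i : 'I_4) : point :=
  match val i with 0 => pA | 1 => pB | 2 => pC | _ => pD end.
Definition p2 (i : 'I_4) : point :=
  match val i with 0 => pA | 1 => pB | 2 => pC | _ => pD' end.
Definition Fid := Frame 1 0 0 1.
Definition Fref := Frame 1 0 0 (-1).
Definition M1 (i : 'I_4) := Fid.
Definition M2 (i : 'I_4) := match val i with 0 | 1 => Fid | _ => Fref end.

Ltac prune := 
  repeat match goal with |- context[Rle_dec ?x ?y] =>
    let h := fresh "h" in
    destruct (Rle_dec x y) as [h|h];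
    [try (exfalso; unfold sqdist in h; simpl in h; lra) |
     try (exfalso; unfold sqdist in h; simpl in h; lra)]; simpl
  end.

Ltac solve_list := repeat match goal with
 | |- cons _ _ = cons _ _ => f_equal
 | |- (_, _) = (_, _) => f_equal
 | |- @eq R _ _ => lra
 end.

Lemma snapLV col i : snapshot T4 LV M1 p1 col i = snapshot T4 LV M2 p2 col i.
Proof.
rewrite /snapshot enum4.
case: (cases4 i) => [->|[->|[->|->]]]; rewrite /= /pA /pB /pC /pD /pD'; prune; rewrite /to_local /=; solve_list.
Qed.

Lemma geo i v :
  (to_global (p1 i) (M1 i) v = p1 i \/ to_global (p1 i) (M1 i) v = Cen p1) ->
  (to_global (p2 i) (M2 i) v = p2 i \/ to_global (p2 i) (M2 i) v = Cen p2) ->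
  to_global (p1 i) (M1 i) v = p1 i /\ to_global (p2 i) (M2 i) v = p2 i.
Proof.
case: v => x y.
case: (cases4 i) => [->|[->|[->|->]]];
rewrite /Cen /to_global /p1 /p2 /M1 /M2 /= /pA /pB /pC /pD /pD' /=;
move=> [[E1 E2]|[E1 E2]] [[F1 F2]|[F1 F2]]; split; f_equal; lra.
Qed.

Lemma conn (p : 'I_4 -> point) :
  vis_adj T4 p o0 o1 -> vis_adj T4 p o1 o0 -> vis_adj T4 p o1 o2 ->
  vis_adj T4 p o2 o1 -> vis_adj T4 p o2 o3 -> vis_adj T4 p o3 o2 ->
  forall i j, clos_refl_trans _ (vis_adj T4 p) i j.
Proof.
move=> a01 a10 a12 a21 a23 a32.
have to1 : forall i, clos_refl_trans _ (vis_adj T4 p) i o1.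
  move=> i; case: (cases4 i) => [->|[->|[->|->]]].
  - exact: rt_step.
  - exact: rt_refl.
  - exact: rt_step.
  - apply: rt_trans (rt_step _ _ _ _ a32) (rt_step _ _ _ _ a21).
have from1 : forall j, clos_refl_trans _ (vis_adj T4 p) o1 j.
  move=> j; case: (cases4 j) => [->|[->|[->|->]]].
  - exact: rt_step.
  - exact: rt_refl.
  - exact: rt_step.
  - apply: rt_trans (rt_step _ _ _ _ a12) (rt_step _ _ _ _ a23).
move=> i j; exact: rt_trans (to1 i) (from1 j).
Qed.

Ltac adj := split; [by move/(congr1 val) | rewrite /sqdist /p1 /p2 /= /pA /pB /pC /pD /pD' /=; lra].

Lemma inj4 (p : 'I_4 -> point) :
  p o0 <> p o1 -> p o0 <> p o2 -> p o0 <> p o3 -> p o1 <> p o2 -> p o1 <> p o3 -> p o2 <> p o3 ->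
  forall i j, p i = p j -> i = j.
Proof.
move=> h01 h02 h03 h12 h13 h23 i j.
case: (cases4 i) => [->|[->|[->|->]]]; case: (cases4 j) => [->|[->|[->|->]]] // E;
exfalso; by [apply: h01|apply: h02|apply: h03|apply: h12|apply: h13|apply: h23].
Qed.

Ltac neq := rewrite /p1 /p2 /= /pA /pB /pC /pD /pD'; case=> *; lra.

Lemma vi1 : valid_init T4 p1.
Proof.
split; first by apply: inj4; neq.
apply: conn; adj.
Qed.

Lemma vi2 : valid_init T4 p2.
Proof.
split; first by apply: inj4; neq.
apply: conn; adj.
Qed.

Lemma lv_not : ~ Task LV T4 P4.
Proof.
move=> [k [A [_ [_ [_ H]]]]].
set act := fun (_ : nat) (_ : 'I_4) => true.
have Hf : fair 4 act by move=> i t; exists t; split.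
have O1 : forall i, orthogonal (M1 i) by move=> i; rewrite /orthogonal /=; lra.
have O2 : forall i, orthogonal (M2 i).
  move=> i; rewrite /M2; case: (val i) => [|[|n]]; rewrite /orthogonal /=; lra.
have [S1 L1] := H M1 act p1 O1 Hf vi1.
have [S2 _] := H M2 act p2 O2 Hf vi2.
have good : forall t, fst (exec T4 LV A M1 act p1 t) = p1 /\ fst (exec T4 LV A M2 act p2 t) = p2 /\
                       snd (exec T4 LV A M1 act p1 t) = snd (exec T4 LV A M2 act p2 t).
  elim=> [|t [IH1 [IH2 IH3]]]; first by [].
  have G : forall i, to_global (p1 i) (M1 i) (fst (A (snapshot T4 LV M2 p2 (snd (exec T4 LV A M2 act p2 t)) i))) = p1 i /\
                     to_global (p2 i) (M2 i) (fst (A (snapshot T4 LV M2 p2 (snd (exec T4 LV A M2 act p2 t)) i))) = p2 i.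
    move=> i; apply: geo.
    - have := S1 t i; cbv beta; rewrite exec_S IH1 IH3 snapLV; exact.
    - have := S2 t i; cbv beta; rewrite exec_S IH2; exact.
  split; [|split]; apply: functional_extensionality => i.
  - by rewrite exec_S IH1 IH3 snapLV (proj1 (G i)).
  - by rewrite exec_S IH2 (proj2 (G i)).
  - by rewrite !exec_Sc IH1 IH2 IH3 snapLV.
case: L1 => t; apply.
by rewrite (proj1 (good t)).
Qed.

Theorem theorem6 : model_gt FV LV.
Proof.
split; first exact: ge_FV_LV.
exists T4, P4; split; [exact: fv_solv | exact: lv_not].
Qed.
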